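(* Let $\mathfrak{C}=(U,M,I,N,J)$ be a formal decision context. Then the set of necessary II-decision rules of $\mathfrak{C}$ is $$\overline{\mathfrak{R}}_{II}(\mathfrak{C})=\{(O^{\square_M\lozenge_M},O^{\square_M})\rightarrow(\cap[O]_{S_2},(\cap[O]_{S_2})^{\lozenge_N})\mid O\in\mathrm{Ext}L_P(\mathfrak{C}_N)\}.$$
   Context: Formal context $(U,M,I)$: $U$ and $M$ are finite nonempty sets and $I\subseteq U\times M$. For $O\subseteq U$ and $C\subseteq M$ define: - $O^{\lozenge}=\{a\in M\mid\exists x\in O\,((x,a)\in I)\}$ and $C^{\square}=\{x\in U\mid \forall a\in M\,((x,a)\in I\Rightarrow a\in C)\}$; - $O^{\square}=\{a\in M\mid \forall x\in U\,((x,a)\in I\Rightarrow x\in O)\}$ and $C^{\lozenge}=\{x\in U\mid \exists a\in C\,((x,a)\in I)\}$. An object-oriented concept is a pair $(O,C)$ with $O^\square=C$ and $C^\lozenge=O$ (set $L_O$). A property-oriented concept is a pair $(O,C)$ with $O^\lozenge=C$ and $C^\square=O$ (set $L_P$). $\mathrm{Ext}$ denotes the set of extents. Standing assumption: contexts are canonical, i.e. every object has at least one attribute and not all attributes, and every attribute is possessed by at least one object and not by all objects. A formal decision context $\mathfrak{C}=(U,M,I,N,J)$ has conditional context $\mathfrak{C}_M=(U,M,I)$ and decision context $\mathfrak{C}_N=(U,N,J)$, with $M\cap N=\emptyset$. Subscripts $M$ and $N$ indicate the context in which an operator is computed. A II-decision rule is $(O,C)\rightarrow(Y,D)$ with $(O,C)\in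 L_O(\mathfrak{C}_M)$, $(Y,D)\in L_P(\mathfrak{C}_N)$ and $O\subseteq Y$; the set of these is $\mathfrak{R}_{II}(\mathfrak{C})$. Implication: $(O_1,C_1)\rightarrow(Y_1,D_1)\Rightarrow(O_2,C_2)\rightarrow(Y_2,D_2)$ iff $O_2\subseteq O_1\subseteq Y_1\subseteq Y_2$. A rule $r$ is necessary if there is no $r_1\in\mathfrak{R}_{II}(\mathfrak{C})\setminus\{r\}$ with $r_1\Rightarrow r$. $S_2$ is the equivalence relation on $\mathrm{Ext}L_P(\mathfrak{C}_N)$ given by $(O,Y)\in S_2$ iff $O^{\square_M}=Y^{\square_M}$. $[O]_{S_2}$ is the class of $O$, and $\cap[O]_{S_2}$ is the intersection of its members. *)

(* Defs.v *)
From mathcomp Require Import all_boot.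
Set Implicit Arguments. Unset Strict Implicit. Unset Printing Implicit Defensive.

Section Context.
Variables (U M : finType) (I : U -> M -> bool).

Definition diaO (O : {set U}) : {set M} := [set a | [exists x in O, I x a]].
Definition boxC (C : {set M}) : {set U} := [set x | [forall a, I x a ==> (a \in C)]].
Definition boxO (O : {set U}) : {set M} := [set a | [forall x, I x a ==> (x \in O)]].
Definition diaC (C : {set M}) : {set U} := [set x | [exists a in C, I x a]].

Definition is_LO (O : {set U}) (C : {set M}) : Prop := boxO O = C /\ diaC C = O.
Definition is_LP (O : {set U}) (C : {set M}) : Prop := diaO O = C /\ boxC C = O.
Definition ExtLP (O : {set U}) : Prop := exists C, is_LP O C.
Definition ExtLPb (O : {set U}) : bool :=
  [exists C : {set M}, (diaO O == C) && (boxC C == O)].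

Definition canonical_context : Prop :=
  (forall x : U, (exists a, I x a) /\ (exists a, ~~ I x a)) /\
  (forall a : M, (exists x, I x a) /\ (exists x, ~~ I x a)).
End Context.

Section Decision.
Variables (U M N : finType) (I : U -> M -> bool) (J : U -> N -> bool).

(* a II-decision rule (O,C) -> (Y,D) is encoded as ((O,C),(Y,D)) *)
Definition rule : Type := prod (prod {set U} {set M}) (prod {set U} {set N}).

Definition is_rule_II (r : rule) : Prop :=
  is_LO I r.1.1 r.1.2 /\ is_LP J r.2.1 r.2.2 /\ r.1.1 \subset r.2.1.

Definition rule_implies (r1 r2 : rule) : Prop :=
  r2.1.1 \subset r1.1.1 /\ r1.1.1 \subset r1.2.1 /\ r1.2.1 \subset r2.2.1.

Definition necessary_II (r : rule) : Prop :=
  is_rule_II r /\ ~ (exists r1, is_rule_II r1 /\ r1 <> r /\ rule_implies r1 r).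

Definition S2_class (O Y : {set U}) : bool := ExtLPb J Y && (boxO I Y == boxO I O).

Definition cap_class (O : {set U}) : {set U} :=
  \bigcap_(Y : {set U} | S2_class O Y) Y.
End Decision.

(* Main.v *)
Require Import Defs.
From mathcomp Require Import all_boot.
Set Implicit Arguments. Unset Strict Implicit.

Section Aux.
Variables (U M N : finType) (I : U -> M -> bool) (J : U -> N -> bool).

Lemma boxO_mono (A B : {set U}) : A \subset B -> boxO I A \subset boxO I B.
Proof.
move=> /subsetP AB; apply/subsetP=> a; rewrite !inE => /forallP H.
apply/forallP=> x; apply/implyP=> Ixa; apply: AB; exact: (implyP (H x)).
Qed.

Lemma diaC_mono (A B : {set M}) : A \subset B -> diaC I A \subset diaC I B.
Proof.
move=> /subsetP AB; apply/subsetP=> x; rewrite !inE => /existsP [a /andP [Ha Hx]].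
apply/existsP; exists a; rewrite Hx andbT; exact: AB.
Qed.

Lemma diaO_mono (A B : {set U}) : A \subset B -> diaO J A \subset diaO J B.
Proof.
move=> /subsetP AB; apply/subsetP=> a; rewrite !inE => /existsP [x /andP [Ha Hx]].
apply/existsP; exists x; rewrite Hx andbT; exact: AB.
Qed.

Lemma boxC_mono (A B : {set N}) : A \subset B -> boxC J A \subset boxC J B.
Proof.
move=> /subsetP AB; apply/subsetP=> x; rewrite !inE => /forallP H.
apply/forallP=> a; apply/implyP=> Ixa; apply: AB; exact: (implyP (H a)).
Qed.

Lemma int_sub (Y : {set U}) : diaC I (boxO I Y) \subset Y.
Proof.
apply/subsetP=> x; rewrite !inE => /existsP [a /andP [Ha Hx]].
move: Ha; rewrite inE => /forallP H; exact: (implyP (H x)).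
Qed.

Lemma boxO_int (Y : {set U}) : boxO I (diaC I (boxO I Y)) = boxO I Y.
Proof.
apply/eqP; rewrite eqEsubset boxO_mono ?int_sub //=.
apply/subsetP=> a Ha; rewrite inE; apply/forallP=> x; apply/implyP=> Ixa.
rewrite inE; apply/existsP; exists a; by rewrite Ha Ixa.
Qed.

Lemma cl_sup (X : {set U}) : X \subset boxC J (diaO J X).
Proof.
apply/subsetP=> x Hx; rewrite inE; apply/forallP=> a; apply/implyP=> Jxa.
rewrite inE; apply/existsP; exists x; by rewrite Hx Jxa.
Qed.

Lemma diaO_cl (X : {set U}) : diaO J (boxC J (diaO J X)) = diaO J X.
Proof.
apply/eqP; rewrite eqEsubset (diaO_mono (cl_sup X)) andbT.
apply/subsetP=> a; rewrite inE => /existsP [x /andP [Hx Jxa]].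
move: Hx; rewrite inE => /forallP /(_ a) /implyP /(_ Jxa); by rewrite inE.
Qed.

Lemma ExtLP_cl (O : {set U}) : ExtLP J O -> boxC J (diaO J O) = O.
Proof. by move=> [C [<- ->]]. Qed.

Lemma ExtLPb_cl (O : {set U}) : ExtLPb J O -> boxC J (diaO J O) = O.
Proof. by move=> /existsP [C /andP [/eqP -> /eqP ->]]. Qed.

Lemma ExtLPb_clX (X : {set U}) : ExtLPb J (boxC J (diaO J X)).
Proof. apply/existsP; exists (diaO J X); by rewrite diaO_cl !eqxx. Qed.

Lemma cap_eq (O : {set U}) : ExtLP J O ->
  cap_class I J O = boxC J (diaO J (diaC I (boxO I O))).
Proof.
move=> HO; have clO := ExtLP_cl HO.
apply/eqP; rewrite eqEsubset; apply/andP; split.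
  apply: bigcap_inf; rewrite /S2_class ExtLPb_clX /=.
  have s1 : boxC J (diaO J (diaC I (boxO I O))) \subset O.
    by rewrite -{2}clO boxC_mono // diaO_mono // int_sub.
  rewrite eqEsubset boxO_mono //= -{1}(boxO_int O) boxO_mono // cl_sup //.
apply/bigcapsP=> Y /andP [HY /eqP bY].
rewrite -bY; apply: subset_trans (_ : boxC J (diaO J Y) \subset Y); last by rewrite (ExtLPb_cl HY).
by rewrite boxC_mono // diaO_mono // int_sub.
Qed.

End Aux.

Theorem theorem4p4 (U M N : finType) (I : U -> M -> bool) (J : U -> N -> bool) :
  (0 < #|U|)%N -> (0 < #|M|)%N -> (0 < #|N|)%N ->
  canonical_context I -> canonical_context J ->
  forall r : rule U M N,
    necessary_II I J r <->
    exists O : {set U}, ExtLP J O /\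
      r = ((diaC I (boxO I O), boxO I O),
           (cap_class I J O, diaO J (cap_class I J O))).
Proof.
move=> _ _ _ _ _ [[O C] [Y D]]; split.
  move=> [[[/= HC HO] [[/= HD HY] /= OY]] Hn].
  subst C D.
  have eqr : forall r1 : rule U M N, is_rule_II I J r1 -> rule_implies r1 ((O, boxO I O), (Y, diaO J Y)) -> r1 = ((O, boxO I O), (Y, diaO J Y)).
    move=> r1 H1 H2; case: (eqVneq r1 ((O, boxO I O), (Y, diaO J Y))) => // ne.
    by exfalso; apply: Hn; exists r1; split => //; split => //; apply/eqP.
  have E1 : O = diaC I (boxO I Y).
    set X := ((diaC I (boxO I Y), boxO I (diaC I (boxO I Y))), (Y, diaO J Y)).
    have R1 : is_rule_II I J X.
      split; first by split => //=; rewrite boxO_int.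
      split; [by split | exact: int_sub].
    have R2 : rule_implies X ((O, boxO I O), (Y, diaO J Y)).
      rewrite /rule_implies /=; split; last by split; [exact: int_sub|].
      by rewrite -HO diaC_mono // boxO_mono.
    by case: (eqr X R1 R2).
  have E2 : Y = boxC J (diaO J O).
    set X := ((O, boxO I O), (boxC J (diaO J O), diaO J (boxC J (diaO J O)))).
    have R1 : is_rule_II I J X.
      split; first by split.
      split; first by split => //=; rewrite diaO_cl.
      exact: cl_sup.
    have R2 : rule_implies X ((O, boxO I O), (Y, diaO J Y)).
      rewrite /rule_implies /=; split => //; split; first exact: cl_sup.
      by rewrite -HY boxC_mono // diaO_mono.
    by case: (eqr X R1 R2).
  have EY : ExtLP J Y by exists (diaO J Y).
  exists Y; split => //.
  by rewrite (cap_eq I EY) -E1 -E2 E1 boxO_int.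
move=> [O0 [HO0 Er]].
have Ecap := cap_eq I HO0; rewrite Ecap in Er.
set iO := diaC I (boxO I O0) in Er Ecap.
set Yc := boxC J (diaO J iO) in Er Ecap.
case: Er => EO EC EY ED; subst O C Y D.
have clO := ExtLP_cl HO0.
have YO : Yc \subset O0 by rewrite -clO /Yc boxC_mono // diaO_mono // int_sub.
have bY : boxO I Yc = boxO I O0.
  apply/eqP; rewrite eqEsubset boxO_mono //= -{1}(boxO_int I O0) boxO_mono //.
  exact: cl_sup.
have rr : is_rule_II I J ((iO, boxO I O0), (Yc, diaO J Yc)).
  split; first by split => //=; rewrite /iO boxO_int.
  split; first by split => //=; rewrite /Yc diaO_cl.
  exact: cl_sup.
split => //.
move=> [[[O1 C1] [Y1 D1]] [[[/= HC1 HO1] [[/= HD1 HY1] /= O1Y1]] [ne [/= s1 [_ s3]]]]].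
apply: ne; subst C1 D1.
have EO1 : O1 = iO.
  apply/eqP; rewrite eqEsubset s1 andbT.
  rewrite -HO1 /iO -bY diaC_mono // boxO_mono //.
  exact: subset_trans O1Y1 s3.
subst O1.
have EY1 : Y1 = Yc.
  apply/eqP; rewrite eqEsubset s3 /=.
  by rewrite -HY1 /Yc boxC_mono // diaO_mono.
subst Y1.
by rewrite /iO boxO_int.
Qed.
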